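(* Let $\gamma_\xi=(\{a,b,c\},\emptyset,\emptyset,\{(b,a,c)\})$ be the GES on three distinct events with no conflicts, no initial causes, and where the occurrence of $a$ adds $b$ as a cause of $c$. Then there is no extended bundle event structure (EBES) $\xi$ with $\mathrm{Traces}(\xi)=\mathrm{Traces}(\gamma_\xi)$.
   Context: GES: $\gamma=(E,\#,\to,\lhd)$ with $\#\subseteq E^2$ irreflexive symmetric, $\to\subseteq E^2$, $\lhd\subseteq E^3$ where $(c,m,t)\in\lhd$ means ''$m$ adds $c$ as a cause of $t$'', requiring $\neg(c\to t)$. $\mathrm{ic}(e)=\{e'\mid e'\to e\}$, $\mathrm{ac}(H,e)=\{e'\mid\exists a\in H.(e',a,e)\in\lhd\}$. For $t=e_1\cdots e_n$, $\overline{t_k}=\{e_1,\ldots,e_k\}$. GES traces: finite sequences of pairwise distinct events, pairwise not in conflict, with $\mathrm{ic}(e_i)\cup\mathrm{ac}(\overline{t_{i-1}},e_i)\subseteq\overline{t_{i-1}}$ for all $i$. EBES: $\xi=(E,\rightsquigarrow,\mapsto)$ with disabling relation $\rightsquigarrow\subseteq E^2$ and bundle relation $\mapsto\subseteq 2^E\times E$, satisfying stability: $X\mapsto e$ implies $e_1\rightsquigarrow e_2$ for all distinct $e_1,e_2\in X$. A trace of $\xi$ is a finite sequence $e_1\cdots e_n$ of pairwise distinct events of $E$ such that for all $i$: $X\mapsto e_i$ implies $X\cap\overline{t_{i-1}}\neq\emptyset$, and for all $j<i$: $\neg(e_i\rightsquigarrow e_j)$ (i.e. $x\rightsquigarrow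 y$ means $y$ never precedes $x$). *)

(* Defs.v *)
From Stdlib Require Import List.
Import ListNotations.
Set Implicit Arguments.

Record GES (T : Type) := {
  ges_E : T -> Prop;
  ges_conf : T -> T -> Prop;
  ges_caus : T -> T -> Prop;          (* -> : ges_caus e' e  means e' -> e *)
  ges_add : T -> T -> T -> Prop       (* (c,m,t) : m adds c as a cause of t *)
}.

Definition ges_wf T (g : GES T) : Prop :=
  (forall x y, ges_conf g x y -> ges_E g x /\ ges_E g y) /\
  (forall x, ~ ges_conf g x x) /\
  (forall x y, ges_conf g x y -> ges_conf g y x) /\
  (forall x y, ges_caus g x y -> ges_E g x /\ ges_E g y) /\
  (forall c m t, ges_add g c m t -> ges_E g c /\ ges_E g m /\ ges_E g t) /\
  (forall c m t, ges_add g c m t -> ~ ges_caus g c t).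

Definition ic T (g : GES T) (e : T) : T -> Prop := fun e' => ges_caus g e' e.
Definition ac T (g : GES T) (H : list T) (e : T) : T -> Prop :=
  fun e' => exists a, In a H /\ ges_add g e' a e.

Definition ges_trace T (g : GES T) (t : list T) : Prop :=
  NoDup t /\
  (forall e, In e t -> ges_E g e) /\
  (forall e e', In e t -> In e' t -> ~ ges_conf g e e') /\
  (forall pre e post, t = pre ++ e :: post ->
     forall e', (ic g e e' \/ ac g pre e e') -> In e' pre).

Record EBES (T : Type) := {
  ebes_E : T -> Prop;
  ebes_dis : T -> T -> Prop;
  ebes_bundle : (T -> Prop) -> T -> Prop
}.

Definition ebes_wf T (x : EBES T) : Prop :=
  (forall e1 e2, ebes_dis x e1 e2 -> ebes_E x e1 /\ ebes_E x e2) /\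
  (forall X e, ebes_bundle x X e -> ebes_E x e /\ forall y, X y -> ebes_E x y) /\
  (forall X e, ebes_bundle x X e ->
     forall e1 e2, X e1 -> X e2 -> e1 <> e2 -> ebes_dis x e1 e2).

Definition ebes_trace T (x : EBES T) (t : list T) : Prop :=
  NoDup t /\
  (forall e, In e t -> ebes_E x e) /\
  (forall pre e post, t = pre ++ e :: post ->
     (forall X, ebes_bundle x X e -> exists y, In y pre /\ X y) /\
     (forall y, In y pre -> ~ ebes_dis x e y)).

Definition gamma_xi T (a b c : T) : GES T := {|
  ges_E := fun e => e = a \/ e = b \/ e = c;
  ges_conf := fun _ _ => False;
  ges_caus := fun _ _ => False;
  ges_add := fun c' m t => c' = b /\ m = a /\ t = c
|}.

(* Main.v *)
Require Import Defs.
From Stdlib Require Import List.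
Import ListNotations.

Ltac decomp H :=
  let x := fresh "x" in let y := fresh "y" in let z := fresh "z" in
  let p := fresh "p" in
  destruct H as [|x [|y [|z p]]]; simpl in *.

Theorem lemma12 (T : Type) (a b c : T) :
  a <> b -> b <> c -> a <> c ->
  ~ exists xi : EBES T,
      ebes_wf xi /\
      (forall t : list T, ebes_trace xi t <-> ges_trace (gamma_xi a b c) t).
Proof.
  intros Hab Hbc Hac [xi [Hwf Heq]].
  assert (Ta : ges_trace (gamma_xi a b c) [a]).
  { repeat split.
    - constructor; [simpl; tauto| constructor].
    - intros e [<-|[]]; simpl; auto.
    - intros e e' _ _ [].
    - intros pre e post Hp e' [[]|[a0 [Hin [_ [_ ->]]]]].
      destruct pre as [|x [|y p]]; simpl in *; try destruct Hin;
      inversion Hp; subst; try congruence. }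
  assert (Tc : ges_trace (gamma_xi a b c) [c]).
  { repeat split.
    - constructor; [simpl; tauto| constructor].
    - intros e [<-|[]]; simpl; auto.
    - intros e e' _ _ [].
    - intros pre e post Hp e' [[]|[a0 [Hin [_ [_ ->]]]]].
      destruct pre as [|x [|y p]]; simpl in *; try destruct Hin;
      inversion Hp; subst; try congruence. }
  assert (Tabc : ges_trace (gamma_xi a b c) [a;b;c]).
  { repeat split.
    - constructor; [simpl; intuition congruence|].
      constructor; [simpl; intuition congruence|].
      constructor; [simpl; tauto| constructor].
    - intros e [<-|[<-|[<-|[]]]]; simpl; auto.
    - intros e e' _ _ [].
    - intros pre e post Hp e' [[]|[a0 [Hin [-> [-> ->]]]]].
      destruct pre as [|x [|y [|z p]]]; simpl in *; try destruct Hin;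
      inversion Hp; subst; try congruence; auto. }
  apply Heq in Ta. apply Heq in Tc. apply Heq in Tabc.
  assert (Tac : ebes_trace xi [a;c]).
  { destruct Ta as [_ [Ea Pa]]. destruct Tc as [_ [Ec Pc]].
    destruct Tabc as [_ [_ Pabc]].
    split; [|split].
    - constructor; [simpl; intuition congruence|].
      constructor; [simpl; tauto|constructor].
    - intros e [<-|[<-|[]]]; [apply Ea|apply Ec]; simpl; auto.
    - intros pre e post Hp.
      destruct pre as [|x [|y p]]; simpl in *; injection Hp; intros; try subst e; try subst x; try subst post.
      + apply (Pa [] a []); reflexivity.
      + split.
        * intros X HX. destruct (proj1 (Pc [] c [] eq_refl) X HX) as [y [[] _]].
        * intros y [<-|[]]. apply (proj2 (Pabc [a;b] c [] eq_refl)). simpl; auto.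
      + destruct p; simpl in *; discriminate. }
  apply Heq in Tac.
  destruct Tac as [_ [_ [_ P]]].
  assert (H := P [a] c [] eq_refl b (or_intror (ex_intro _ a (conj (or_introl eq_refl) (conj eq_refl (conj eq_refl eq_refl)))))).
  simpl in H. intuition congruence.
Qed.
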